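(* Fix $0<C<1$ and consider all probability vectors $w=(w_1,\dots,w_k)$ (of any finite length $k$, with $w_i\ge0$ and $\sum_i w_i=1$) satisfying $\sum_i w_i^3=C$. Then the minimum of $\sum_i w_i^4$ over all such vectors is attained by a vector of the form $w_1=\dots=w_{m-1}\ge w_m>0$, where $m$ is the smallest possible length for which a vector of this form satisfies $\sum_i w_i^3=C$. *)

(* Defs.v *)
From mathcomp Require Import all_boot all_order all_algebra.
From mathcomp Require Import reals.
Set Implicit Arguments. Unset Strict Implicit. Unset Printing Implicit Defensive.
Import Order.TTheory GRing.Theory Num.Theory.
Local Open Scope ring_scope.

Definition prob_vec (R : realType) (k : nat) (w : 'I_k -> R) : Prop :=
  (forall i, 0 <= w i) /\ \sum_(i < k) w i = 1.

Definition psum (R : realType) (k : nat) (w : 'I_k -> R) (p : nat) : R :=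
  \sum_(i < k) w i ^+ p.

(* w has the form w_1 = ... = w_{m-1} >= w_m > 0 (0-indexed: entries
   0..m-2 are equal, each >= the last entry m-1, which is positive). *)
Definition special_form (R : realType) (m : nat) (w : 'I_m -> R) : Prop :=
  (0 < m)%N /\
  (forall i j : 'I_m, (i < m.-1)%N -> (j < m.-1)%N -> w i = w j) /\
  (forall i j : 'I_m, (i < m.-1)%N -> nat_of_ord j = m.-1 -> w j <= w i) /\
  (forall j : 'I_m, nat_of_ord j = m.-1 -> 0 < w j).

(* Main.v *)
Require Import Defs.
From mathcomp Require Import all_boot all_order all_algebra.
From mathcomp Require Import reals.
From mathcomp Require Import ring lra.
From mathcomp Require Import all_classical all_analysis.
Import Order.TTheory GRing.Theory Num.Theory.
Import numFieldNormedType.Exports.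
Local Open Scope ring_scope.
Set Implicit Arguments. Unset Strict Implicit.

Section Trip.
Variable R : realType.
Implicit Types x y z : R.

Lemma p4_ident x y z :
  3 * (x^+4 + y^+4 + z^+4) =
  3 * (x+y+z)^+4 + 6 * (x*y+y*z+z*x)^+2
  + 4 * (x+y+z) * ((x^+3+y^+3+z^+3) - (x+y+z)^+3).
Proof. ring. Qed.

Lemma p4_cmp x y z x' y' z' :
  x'+y'+z' = x+y+z -> x'^+3+y'^+3+z'^+3 = x^+3+y^+3+z^+3 ->
  0 <= x'*y'+y'*z'+z'*x' -> x'*y'+y'*z'+z'*x' < x*y+y*z+z*x ->
  x'^+4+y'^+4+z'^+4 < x^+4+y^+4+z^+4.
Proof.
move=> hs ht hq0 hq.
have h1 := p4_ident x y z. have h2 := p4_ident x' y' z'.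
rewrite hs ht in h2.
set q := x*y+y*z+z*x in h1 hq. set q' := x'*y'+y'*z'+z'*x' in h2 hq hq0.
nra.
Qed.

Lemma pm9 x y z : 0 <= x -> 0 <= y -> 0 <= z ->
  (x+y+z)^+3 <= 9 * (x^+3+y^+3+z^+3).
Proof.
move=> hx hy hz.
have a1 : 0 <= (x+y)*(x-y)^+2 by apply: mulr_ge0; [lra|exact: sqr_ge0].
have a2 : 0 <= (y+z)*(y-z)^+2 by apply: mulr_ge0; [lra|exact: sqr_ge0].
have a3 : 0 <= (z+x)*(z-x)^+2 by apply: mulr_ge0; [lra|exact: sqr_ge0].
have a4 : 0 <= (x+y+z)*((x-y)^+2 + (y-z)^+2 + (z-x)^+2).
  by apply: mulr_ge0; [lra| rewrite !addr_ge0 // sqr_ge0].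
lra.
Qed.

End Trip.

Section Trip2.
Variable R : realType.
Implicit Types x y z : R.

Lemma trip_improve x y z : 0 < y -> 0 < z -> y < x -> z < x ->
  exists x' y' z', [/\ 0 <= x' /\ 0 <= y' /\ 0 <= z', x'+y'+z' = x+y+z,
     x'^+3+y'^+3+z'^+3 = x^+3+y^+3+z^+3 & x'^+4+y'^+4+z'^+4 < x^+4+y^+4+z^+4].
Proof.
move=> hy hz hyx hzx.
set s := x+y+z. set t := x^+3+y^+3+z^+3. set q := x*y+y*z+z*x.
have hs : 0 < s by rewrite /s; lra.
have e3 : t - s^+3 + 3*s*q = 3*(x*y*z) by rewrite /t /s /q; ring.
have hxyz : 0 < x*y*z by rewrite !mulr_gt0 //; lra.
have ht9 : s^+3 <= 9*t by apply: pm9; lra.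
have hts : t <= s^+3.
  have hf : s*q - x*y*z = (x+y)*(y+z)*(z+x) by rewrite /s /q; ring.
  have : 0 <= (x+y)*(y+z)*(z+x) by rewrite !mulr_ge0 //; lra.
  lra.
have [hA|hB] := leP (s^+3) (4*t).
- pose pp := (s^+3 - t)/(3*s).
  have hp : 3 * s * pp = s^+3 - t by rewrite /pp; field; lra.
  pose D := s^+2 - 4 * pp.
  have hD : 0 <= D.
    have : 0 <= 3*s*D by rewrite /D; nra.
    by rewrite pmulr_rge0 //; lra.
  pose r := Num.sqrt D.
  have hr2 : r^+2 = D by rewrite /r sqr_sqrtr.
  have hr0 : 0 <= r by rewrite /r sqrtr_ge0.
  have hp0 : 0 <= pp by nra.
  have hrs : r <= s.
    have h : (r-s)*(r+s) = D - s^+2 by rewrite -hr2; ring.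
    rewrite leNgt; apply/negP => hc.
    have : 0 < (r-s)*(r+s) by apply: mulr_gt0; lra.
    rewrite h /D; lra.
  exists ((s+r)/2), ((s-r)/2), 0; split.
  + split; [|split]; lra.
  + rewrite -/s; lra.
  + rewrite -/t. have -> : ((s + r) / 2) ^+ 3 + ((s - r) / 2) ^+ 3 + 0 ^+ 3 =
        (s^+3 + 3 * s * r^+2)/4 by field.
    rewrite hr2 /D. nra.
  + apply: p4_cmp.
    * rewrite -/s; lra.
    * rewrite -/t. have -> : ((s + r) / 2) ^+ 3 + ((s - r) / 2) ^+ 3 + 0 ^+ 3 =
        (s^+3 + 3 * s * r^+2)/4 by field.
      rewrite hr2 /D. nra.
    * have -> : (s + r) / 2 * ((s - r) / 2) + (s - r) / 2 * 0 + 0 * ((s + r) / 2) = (s^+2 - r^+2)/4 by field.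
      rewrite hr2 /D. lra.
    * have -> : (s + r) / 2 * ((s - r) / 2) + (s - r) / 2 * 0 + 0 * ((s + r) / 2) = (s^+2 - r^+2)/4 by field.
      rewrite hr2 /D -/q. nra.
- pose g := fun u : R => 2 * u ^+ 3 + (s - 2 * u) ^+ 3.
  have gc : continuous (g : R -> R).
    have -> : g = horner (2%:P * 'X^3 + (s%:P - 2%:P * 'X)^+3).
      by apply/funext => u; rewrite /g !hornerE.
    by move=> u; exact: continuous_horner.
  have [u hu hgu] : exists2 u, u \in `[s/3, s/2] & g u = t.
    apply: IVT.
    + lra.
    + exact/continuous_subspaceT.
    + have -> : g (s/3) = s^+3/9 by rewrite /g; field.
      have -> : g (s/2) = s^+3/4 by rewrite /g; field.
      apply/andP; split; [rewrite ge_min; apply/orP; left | rewrite le_max; apply/orP; right]; lra.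
  move: hu; rewrite in_itv /= => /andP[hu1 hu2].
  pose w := s - 2*u.
  have hgt : 2*u^+3 + w^+3 = t by [].
  exists u, u, w; split.
  + split; [|split]; rewrite /w; lra.
  + rewrite /w -/s; lra.
  + rewrite -/t -hgt; ring.
  + apply: p4_cmp.
    * rewrite /w -/s; lra.
    * rewrite -/t -hgt; ring.
    * have : 0 <= w by rewrite /w; lra.
      have : 0 <= u by lra.
      nra.
    * rewrite -/q; rewrite ltNge; apply/negP => hqq.
      set q' := u * u + u * w + w * u in hqq.
      pose M := Num.max y (Num.max z w).
      have hyM : y <= M by rewrite /M le_max lexx.
      have hzM : z <= M by rewrite /M !le_max lexx orbT.
      have hwM : w <= M by rewrite /M !le_max lexx !orbT.
      have hMx : M < x.
        rewrite /M !gt_max hyx hzx /=. have hsd : s = x+y+z by []. rewrite /w; lra.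
      pose X := (x + M)/2.
      have key : 3*((X-x)*(X-y)*(X-z) - (X-u)^+2*(X-w) - (q-q')*(X-s)) =
                 (2*u^+3+w^+3) - (x^+3+y^+3+z^+3).
        by rewrite /q' /w /q /s; ring.
      rewrite hgt -/t subrr in key.
      have hP : (X-x)*(X-y)*(X-z) < 0.
        rewrite pmulr_llt0; last by rewrite /X; lra.
        rewrite pmulr_llt0; last by rewrite /X; lra.
        rewrite /X; lra.
      have hQ : 0 <= (X-u)^+2*(X-w).
        by apply: mulr_ge0; [exact: sqr_ge0| rewrite /X; lra].
      have hR : 0 <= (q-q')*(X-s).
        by apply: mulr_le0; [lra| rewrite /X /s; lra].
      lra.
Qed.

End Trip2.

Local Open Scope classical_set_scope.

Section Min.
Variables (R : realType) (C : R).

Lemma sum_coord_cont k (F : R -> R) : continuous F ->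
  continuous (fun c : 'rV[R]_k => \sum_(i < k) F (c ord0 i)).
Proof.
move=> Fc.
suff H : forall r : seq 'I_k, continuous (fun c : 'rV[R]_k => \sum_(i <- r) F (c ord0 i)).
  exact: H.
elim => [|i r IH].
  under eq_fun do rewrite big_nil. exact: cst_continuous.
under eq_fun do rewrite big_cons.
move=> c; apply: continuousD; last exact: IH.
apply: (@continuous_comp _ _ _ (fun c : 'rV[R]_k => c ord0 i) F).
  exact: coord_continuous.
exact: Fc.
Qed.

Definition feas k (v : 'I_k -> R) := prob_vec v /\ psum v 3 = C.

Lemma entry_le1 k (v : 'I_k -> R) : prob_vec v -> forall i, v i <= 1.
Proof.
move=> [h0 h1] i; rewrite -h1 (bigD1 i) //= lerDl.
by apply: sumr_ge0 => j _; exact: h0.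
Qed.

Lemma minimizer k (v : 'I_k -> R) : feas v ->
  exists vs : 'I_k -> R, feas vs /\ forall u : 'I_k -> R, feas u -> psum vs 4 <= psum u 4.
Proof.
move=> fv.
pose box := [set c : 'rV[R]_k | forall i, `[0, 1]%classic (c ord0 i)].
pose B := (fun c : 'rV[R]_k => \sum_(i < k) c ord0 i) @^-1` [set x | x = 1] `&`
          (fun c : 'rV[R]_k => \sum_(i < k) (c ord0 i)^+3) @^-1` [set x | x = C].
pose A := box `&` B.
have Afeas : forall c, A c <-> feas (fun i => c ord0 i).
  move=> c; split.
  - move=> [hb [h1 h3]]; split; [split|] => //.
    by move=> i; have := hb i; rewrite /= in_itv /= => /andP[].
  - move=> [[h0 h1] h3]; split; last by split.
    move=> i /=; rewrite in_itv /= h0 /=.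
    exact: (@entry_le1 _ (fun i => c ord0 i)).
have cA : compact A.
  apply: compact_closedI.
    by apply: (@rV_compact _ _ (fun=> `[(0:R), 1]%classic)) => _; exact: segment_compact.
  apply: closedI; apply: preimage_closed; try exact: closed_eq.
    by move=> c _; apply: (@sum_coord_cont k id) => y.
  move=> c _; apply: (@sum_coord_cont k (fun x => x^+3)).
  exact: exprn_continuous.
have A0 : A !=set0.
  by exists (\row_i v i); apply/Afeas; move: fv; congr feas; apply/funext => i; rewrite mxE.
have fc : {within A, continuous (fun c : 'rV[R]_k => \sum_(i < k) (c ord0 i)^+4)}.
  apply: continuous_subspaceT; apply: (@sum_coord_cont k (fun x => x^+4)).
  exact: exprn_continuous.
have [c cinA cmin] := EVT_min_rV A0 cA fc.
exists (fun i => c ord0 i); split; first by apply/Afeas; rewrite -inE.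
move=> u fu; have h := cmin (\row_i u i).
have : (\row_i u i) \in A.
  rewrite inE; apply/Afeas.
  by move: fu; congr feas; apply/funext => i; rewrite mxE.
move/h; rewrite /psum /= => H; apply: (le_trans H).
by rewrite le_eqVlt; apply/orP; left; apply/eqP; apply: eq_bigr => i _; rewrite mxE.
Qed.

End Min.

Local Close Scope classical_set_scope.

Section Struct.
Variables (R : realType) (C : R).

Lemma sum3 k (G : 'I_k -> R) i j l : i != j -> i != l -> j != l ->
  \sum_r G r = G i + G j + G l + \sum_(r | (r != i) && (r != j) && (r != l)) G r.
Proof.
move=> hij hil hjl.
rewrite (bigD1 i) //= (bigD1 j) /=; last by rewrite eq_sym hij.
rewrite (bigD1 l) /=; last by rewrite eq_sym hil eq_sym hjl.
rewrite !addrA; congr (_ + _); try by apply: eq_bigl => r; rewrite -!andbA.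
Qed.

Lemma struct_min k (vs : 'I_k -> R) : feas C vs ->
  (forall u : 'I_k -> R, feas C u -> psum vs 4 <= psum u 4) ->
  exists (n : nat) (a b : R), [/\ 0 < b, b <= a &
    forall F : R -> R, F 0 = 0 -> \sum_r F (vs r) = n%:R * F a + F b].
Proof.
move=> [[h0 h1] h3] hmin.
have k0 : (0 < k)%N.
  case: k vs h0 h1 {h3 hmin} => // vs h0; rewrite big_ord0 => /eqP; rewrite eq_sym oner_eq0.
  done.
pose i0 := Order.arg_max (Ordinal k0) xpredT vs.
have hM : forall i, vs i <= vs i0.
  rewrite /i0; case: (@arg_maxP _ _ _ (Ordinal k0) xpredT vs) => //= j _ H i.
  exact: H.
set M := vs i0.
have M0 : 0 < M.
  rewrite lt_neqAle h0 andbT; apply/eqP => hM0.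
  move: h1; rewrite big1 => [/eqP|i _]; first by rewrite eq_sym oner_eq0.
  by apply/le_anti; rewrite h0 andbT hM0 hM.
have key : forall j l, j != l -> 0 < vs j < M -> 0 < vs l < M -> False.
  move=> j l hjl /andP[hj1 hj2] /andP[hl1 hl2].
  have hij : i0 != j by apply/eqP => e; move: hj2; rewrite -e /M ltxx.
  have hil : i0 != l by apply/eqP => e; move: hl2; rewrite -e /M ltxx.
  have [x' [y' [z' [[hx' [hy' hz']] hs ht hp]]]] := @trip_improve R _ _ _ hj1 hl1 hj2 hl2.
  pose v' := fun r => if r == i0 then x' else if r == j then y' else if r == l then z' else vs r.
  have E : forall F : R -> R, \sum_r F (v' r) + F M + F (vs j) + F (vs l) =
                             \sum_r F (vs r) + F x' + F y' + F z'.
    move=> F.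
    rewrite (sum3 (fun r => F (v' r)) hij hil hjl) (sum3 (fun r => F (vs r)) hij hil hjl).
    have vi : v' i0 = x' by rewrite /v' eqxx.
    have vj : v' j = y' by rewrite /v' eq_sym (negbTE hij) eqxx.
    have vl : v' l = z' by rewrite /v' eq_sym (negbTE hil) eq_sym (negbTE hjl) eqxx.
    rewrite vi vj vl.
    have -> : \sum_(r | (r != i0) && (r != j) && (r != l)) F (v' r) =
        \sum_(r | (r != i0) && (r != j) && (r != l)) F (vs r).
      by apply: eq_bigr => r /andP[/andP[/negbTE h1' /negbTE h2'] /negbTE h3']; rewrite /v' h1' h2' h3'.
    rewrite /M; lra.
  have fv' : feas C v'.
    split; [split|].
    - move=> r; rewrite /v'; case: ifP => // _; case: ifP => // _; case: ifP => // _.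
    - have := E id; rewrite /= h1 -/M; lra.
    - rewrite /psum; have := E (fun x => x ^+ 3); rewrite /= -/(psum vs 3) h3; lra.
  have := hmin v' fv'; rewrite /psum.
  have := E (fun x => x ^+ 4); rewrite /=; lra.
case: (pickP [pred j | (0 < vs j) && (vs j < M)]) => [j0 /= /andP[hj01 hj02] | hnone].
- exists #|[pred r | vs r == M]|, M, (vs j0); split; [exact: hj01 | exact: ltW hj02 |].
  move=> F F0.
  rewrite (bigID (fun r => vs r == M)) /=.
  rewrite (eq_bigr (fun=> F M)); last by move=> r /eqP ->.
  rewrite sumr_const mulr_natl; congr (_ + _).
  rewrite (bigD1 j0) /=; last by rewrite lt_eqF.
  rewrite big1 ?addr0 // => r /andP[hrM hrj].
  have hr : vs r = 0.
    apply/eqP; rewrite eq_le h0 andbT leNgt; apply/negP => hr0.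
    apply: (key r j0) => //; first by rewrite hr0 lt_neqAle hrM hM.
    by rewrite hj01 hj02.
  by rewrite hr.
- have hc : forall r, vs r = 0 \/ vs r = M.
    move=> r; have := hnone r; rewrite /= => /negbT; rewrite negb_and -!leNgt.
    case/orP => H; first by left; apply/le_anti; rewrite H h0.
    by right; apply/le_anti; rewrite H hM.
  have hcard : (0 < #|[pred r | vs r == M]|)%N.
    by apply/card_gt0P; exists i0; rewrite inE /=.
  exists #|[pred r | vs r == M]|.-1, M, M; split => //.
  move=> F F0.
  rewrite (bigID (fun r => vs r == M)) /=.
  rewrite (eq_bigr (fun=> F M)); last by move=> r /eqP ->.
  rewrite [X in _ + X]big1 ?addr0; last first.
    move=> r hr; case: (hc r) => e; [by rewrite e F0 | by move: hr; rewrite e eqxx].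
  by rewrite sumr_const mulr_natl -mulrSr prednK.
Qed.

End Struct.

Section TV.
Variable R : realType.

Lemma tv_lo (N a b : R) : 0 <= N -> 0 < b -> b <= a -> N*a + b = 1 ->
  1 <= (N+1)^+2 * (N*a^+3 + b^+3).
Proof.
move=> hN hb hba h1.
have id : (N+1)^+2 * (N*a^+3 + b^+3) - (N*a+b)^+3 =
   N*(a-b)^+2*(N*(2*a+b) + a + 2*b) by ring.
have : 0 <= N*(a-b)^+2*(N*(2*a+b) + a + 2*b).
  apply: mulr_ge0; [apply: mulr_ge0 => //; exact: sqr_ge0 | nra].
rewrite h1 expr1n in id; lra.
Qed.

Lemma tv_hi (N a b : R) : 1 <= N -> 0 < b -> b <= a -> N*a + b = 1 ->
  N^+2 * (N*a^+3 + b^+3) < 1.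
Proof.
move=> hN hb hba h1.
have id : (N*a+b)^+3 - N^+2 * (N*a^+3 + b^+3) =
   3*N^+2*(a^+2*b - b^+3) + 2 * N^+2 * b^+3 + 3*N*a*b^+2 + b^+3 by ring.
have h2 : 0 <= a^+2*b - b^+3.
  have -> : a^+2*b - b^+3 = b*((a-b)*(a+b)) by ring.
  apply: mulr_ge0; [lra| apply: mulr_ge0; lra].
have h3 : 0 < b^+3 by rewrite exprn_gt0.
have h4 : 0 <= 3*N^+2*(a^+2*b - b^+3) by apply: mulr_ge0 => //; nra.
have h5 : 0 <= 2 * N^+2 * b^+3 by apply: mulr_ge0 => //; [nra | lra].
have h6 : 0 <= 3*N*a*b^+2 by apply: mulr_ge0; [nra| exact: sqr_ge0].
rewrite h1 expr1n in id; lra.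
Qed.

Lemma tv_unique (n n' : nat) (a b a' b' : R) :
  0 < b -> b <= a -> n%:R*a + b = 1 ->
  0 < b' -> b' <= a' -> n'%:R*a' + b' = 1 ->
  n%:R*a^+3 + b^+3 = n'%:R*a'^+3 + b'^+3 -> n%:R*a^+3 + b^+3 < 1 ->
  n = n' /\ n%:R*a^+4 + b^+4 = n'%:R*a'^+4 + b'^+4.
Proof.
move=> hb hba h1 hb' hba' h1' hC hC1.
have n1 : (1 <= n)%N.
  rewrite lt0n; apply/negP => /eqP n0; move: h1 hC1; rewrite n0 mul0r add0r => ->.
  by rewrite mul0r add0r expr1n ltxx.
have n1' : (1 <= n')%N.
  rewrite lt0n; apply/negP => /eqP n0; move: h1' hC1; rewrite hC n0 mul0r add0r => ->.
  by rewrite mul0r add0r expr1n ltxx.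
set C := n%:R*a^+3 + b^+3 in hC hC1.
have lo : forall m (x y : R), 0 < y -> y <= x -> m%:R*x + y = 1 ->
    1 <= (m.+1)%:R^+2 * (m%:R*x^+3 + y^+3).
  by move=> m x y ? ? ?; rewrite -addn1 natrD; apply: tv_lo.
have hi : forall m (x y : R), (1 <= m)%N -> 0 < y -> y <= x -> m%:R*x + y = 1 ->
    m%:R^+2 * (m%:R*x^+3 + y^+3) < 1.
  by move=> m x y hm ? ? ?; apply: tv_hi => //; rewrite ler1n.
have C0 : 0 < C.
  have h3 : 0 < b^+3 by rewrite exprn_gt0.
  have h4 : 0 <= n%:R*a^+3 by apply: mulr_ge0 => //; apply: exprn_ge0; lra.
  rewrite /C; lra.
have nn : n = n'.
  have cmp : forall m m' : nat, (m < m')%N -> (1 <= m')%N ->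
      1 <= (m.+1)%:R^+2 * C -> m'%:R^+2 * C < 1 -> False.
    move=> m m' hm hm1 hl hh.
    have : (m.+1)%:R^+2 <= m'%:R^+2 :> R by rewrite lerXn2r ?nnegrE ?ler0n // ler_nat.
    move=> hle; have : (m.+1)%:R^+2 * C <= m'%:R^+2 * C by rewrite ler_pM2r.
    lra.
  case: (ltngtP n n') => // hnn.
  - by exfalso; apply: (cmp n n' hnn n1' (lo _ _ _ hb hba h1)); rewrite hC; apply: hi.
  - by exfalso; apply: (cmp n' n hnn n1 _ (hi _ _ _ n1 hb hba h1)); rewrite hC; apply: lo.
subst n'.
split => //.
set N := n%:R.
have hN : 1 <= N by rewrite /N ler1n.
have aa : a = a'.
  have gen : forall x y x' y' : R, 0 < y -> y <= x -> N*x + y = 1 ->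
      0 < y' -> y' <= x' -> N*x' + y' = 1 -> x < x' ->
      N*x^+3 + y^+3 < N*x'^+3 + y'^+3.
    move=> x y x' y' hy hyx e1 hy' hyx' e1' hxx.
    have dy : y - y' = N*(x'-x) by lra.
    have id : (N*x'^+3 + y'^+3) - (N*x^+3 + y^+3) =
       N*(x'-x)*((x'^+2+x'*x+x^+2) - (y^+2+y*y'+y'^+2)).
      have ey : y' = y - N*(x'-x) by lra.
      rewrite ey; ring.
    have : 0 < N*(x'-x)*((x'^+2+x'*x+x^+2) - (y^+2+y*y'+y'^+2)).
      apply: mulr_gt0; first by apply: mulr_gt0; lra.
      have hNd : 0 < N*(x'-x) by apply: mulr_gt0; lra.
      have hyy : y' < y by lra.
      have t1 : 0 < (x'-y)*(x'+y) by apply: mulr_gt0; lra.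
      have t2a : 0 < x'*(x-y') by apply: mulr_gt0; lra.
      have t2b : 0 < y'*(x'-y) by apply: mulr_gt0; lra.
      have t3 : 0 < (x-y')*(x+y') by apply: mulr_gt0; lra.
      lra.
    lra.
  case: (ltgtP a a') => // hlt.
  - by have := gen _ _ _ _ hb hba h1 hb' hba' h1' hlt; rewrite -/C hC ltxx.
  - by have := gen _ _ _ _ hb' hba' h1' hb hba h1 hlt; rewrite -/C hC ltxx.
subst a'.
have -> : b' = b by lra.
done.
Qed.

End TV.

Section F.
Variable R : realType.

Lemma special_tv m (w : 'I_m -> R) : special_form w ->
  exists n (a b : R), [/\ m = n.+1, 0 < b, b <= a &
    forall F : R -> R, \sum_i F (w i) = n%:R * F a + F b].
Proof.
case: m w => [w [] //|n w [_ [h2 [h3 h4]]]].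
pose b := w ord_max.
pose a := if n is n'.+1 then w ord0 else b.
have wa : forall i : 'I_n, w (widen_ord (leqnSn n) i) = a.
  case: n w h2 h3 h4 @b @a => [w _ _ _ b a [] //|n w h2 h3 h4 b a i].
  by apply: h2 => //=; exact: ltn_ord.
exists n, a, b; split => //.
- by apply: h4.
- case: n w h2 h3 h4 @b @a wa => [//|n w h2 h3 h4 b a wa].
  by apply: h3.
- move=> F; rewrite big_ord_recr /=; congr (_ + _).
  rewrite (eq_bigr (fun=> F a)); last by move=> i _; rewrite wa.
  by rewrite sumr_const card_ord mulr_natl.
Qed.

End F.

Section G.
Variable R : realType.

Lemma exists_level (C : R) : 0 < C -> C < 1 ->
  exists n : nat, [/\ (1 <= n)%N, 1 <= (n.+1)%:R^+2 * C & n%:R^+2 * C < 1].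
Proof.
move=> C0 C1.
have ex : exists n, 1 <= (n.+1)%:R^+2 * C.
  pose K := Num.Def.archi_bound (C^-1).
  have hK : C^-1 < K%:R by apply: archi_boundP; rewrite invr_ge0 ltW.
  exists K.
  have h1 : K%:R * C > 1 by rewrite -ltr_pdivrMr // mul1r.
  have h2 : (K.+1)%:R^+2 >= K%:R :> R.
    rewrite -natrX ler_nat; apply: (leq_trans (leqnSn K)).
    by rewrite expnS leq_pmulr // expn_gt0.
  have : K%:R * C <= (K.+1)%:R^+2 * C by rewrite ler_pM2r.
  lra.
case: (ex_minnP ex) => n Pn Hmin.
exists n; split => //.
- rewrite lt0n; apply/negP => /eqP n0; move: Pn; rewrite n0 expr1n mul1r.
  by rewrite leNgt C1.
- case: n Pn Hmin => [|n] Pn Hmin; first by rewrite expr0n mul0r.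
  rewrite ltNge; apply/negP => H.
  by have := Hmin n H; rewrite ltnn.
Qed.

Lemma exists_special (C : R) : 0 < C -> C < 1 ->
  exists (n : nat) (a : R), [/\ (1 <= n)%N, 0 < 1 - n%:R * a, 1 - n%:R * a <= a &
    n%:R * a^+3 + (1 - n%:R*a)^+3 = C].
Proof.
move=> C0 C1.
have [n [n1 hlo hhi]] := exists_level C0 C1.
set N := n%:R in hlo hhi *.
have N1 : 1 <= N by rewrite /N ler1n.
have hN1 : (n.+1)%:R = N + 1 :> R by rewrite /N -natr1.
rewrite -/N hN1 in hlo.
pose f := fun x : R => N * x^+3 + (1 - N*x)^+3.
have fc : continuous (f : R -> R).
  have -> : f = horner (N%:P * 'X^3 + (1 - N%:P * 'X)^+3).
    by apply/funext => u; rewrite /f !hornerE.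
  by move=> u; exact: continuous_horner.
have flo : f ((N+1)^-1) = ((N+1)^+2)^-1 by rewrite /f; field; lra.
have fhi : f (N^-1) = (N^+2)^-1 by rewrite /f; field; lra.
have [a ha fa] : exists2 a, a \in `[(N+1)^-1, N^-1] & f a = C.
  apply: IVT.
  - by rewrite lef_pV2 ?posrE; lra.
  - exact/continuous_subspaceT.
  - rewrite flo fhi; apply/andP; split.
    + rewrite ge_min; apply/orP; left.
      rewrite -div1r ler_pdivrMr; last by apply: exprn_gt0; lra.
      by rewrite mulrC.
    + rewrite le_max; apply/orP; right.
      rewrite -div1r ler_pdivlMr; last by apply: exprn_gt0; lra.
      rewrite mulrC; lra.
move: ha; rewrite in_itv /= => /andP[ha1 ha2].
have hN0 : N + 1 != 0 by apply/negP => /eqP h; lra.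
have hN0' : N != 0 by apply/negP => /eqP h; lra.
have hNa1 : 1 <= (N+1) * a.
  have e : (N+1)*(N+1)^-1 = 1 by rewrite mulfV.
  apply: (@le_trans _ _ ((N+1) * (N+1)^-1)); first by rewrite e.
  apply: ler_wpM2l => //; lra.
have hNa2 : N * a <= 1.
  have e : N*N^-1 = 1 by rewrite mulfV.
  apply: (@le_trans _ _ (N * N^-1)); first by apply: ler_wpM2l => //; lra.
  by rewrite e.
have hNa3 : N * a != 1.
  apply/negP => /eqP e.
  have ea : a = N^-1 by apply: (mulfI hN0'); rewrite mulfV // e.
  move: fa; rewrite ea fhi => eC.
  have : N^+2 * (N^+2)^-1 = 1 by rewrite mulfV // expf_eq0.
  rewrite eC; lra.
exists n, a; split => //.
- have : N * a < 1 by rewrite lt_neqAle hNa3 hNa2.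
  lra.
- lra.
Qed.

End G.

Theorem lemma2p7 (R : realType) (C : R) (hC0 : 0 < C) (hC1 : C < 1) :
  exists m : nat,
    (exists w : 'I_m -> R, special_form w /\ prob_vec w /\ psum w 3 = C) /\
    (forall m' : nat, (m' < m)%N -> forall w : 'I_m' -> R,
        special_form w -> prob_vec w -> psum w 3 <> C) /\
    (forall w : 'I_m -> R, special_form w -> prob_vec w -> psum w 3 = C ->
       forall (k : nat) (v : 'I_k -> R), prob_vec v -> psum v 3 = C ->
         psum w 4 <= psum v 4).
Proof.
have [n [a [n1 hb hba hC]]] := exists_special hC0 hC1.
set b := 1 - n%:R * a in hb hba hC.
have h1 : n%:R * a + b = 1 by rewrite /b; lra.
have hC' : n%:R * a^+3 + b^+3 < 1 by rewrite hC.
exists n.+1; split; [|split].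
- pose w0 := fun i : 'I_n.+1 => if (i < n)%N then a else b.
  have sw : forall F : R -> R, \sum_i F (w0 i) = n%:R * F a + F b.
    move=> F; rewrite big_ord_recr /= /w0 /= ltnn; congr (_ + _).
    rewrite (eq_bigr (fun=> F a)); last by move=> i _; rewrite /= ltn_ord.
    by rewrite sumr_const card_ord mulr_natl.
  exists w0; split; [|split].
  + split => //; split; [|split].
    * by move=> i j /= hi hj; rewrite /w0 hi hj.
    * by move=> i j /= hi hj; rewrite /w0 hi hj ltnn.
    * by move=> j /= hj; rewrite /w0 hj ltnn.
  + split; last by move: (sw id) => /= ->.
    move=> i; rewrite /w0; case: ifP => _; lra.
  + by rewrite /psum (sw (fun x => x ^+ 3)).
- move=> m' hm' w sw pw w3; case: pw => w0 w1.
  have [n' [a' [b' [em hb' hba' sF]]]] := special_tv sw.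
  have h1' : n'%:R * a' + b' = 1 by have /= e := sF id; rewrite -e w1.
  have h3' : n'%:R * a'^+3 + b'^+3 = C by rewrite -w3 /psum (sF (fun x => x^+3)).
  have [enn _] := @tv_unique R n n' a b a' b' hb hba h1 hb' hba' h1' (etrans hC (esym h3')) hC'.
  by move: hm'; rewrite em enn ltnn.
- move=> w sw pw w3 k v pv v3.
  have [n' [a' [b' [em hb' hba' sF]]]] := special_tv sw.
  have h1' : n'%:R * a' + b' = 1 by case: pw => _ w1; have /= e := sF id; rewrite -e w1.
  have [vs [fvs vmin]] := minimizer (C := C) (conj pv v3).
  have [ns [as_ [bs [hbs hbas sFs]]]] := struct_min fvs vmin.
  have h1s : ns%:R * as_ + bs = 1.
    by case: fvs => [[_ w1] _]; have /= e := sFs id erefl; rewrite -e w1.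
  have h3s : ns%:R * as_^+3 + bs^+3 = C.
    by case: fvs => [_ <-]; rewrite /psum (sFs (fun x => x^+3)) // expr0n.
  have h3' : n'%:R * a'^+3 + b'^+3 = C by rewrite -w3 /psum (sF (fun x => x^+3)).
  have [_ e4] := @tv_unique R n' ns a' b' as_ bs hb' hba' h1' hbs hbas h1s
     (etrans h3' (esym h3s)) (eq_ind_r (fun c => c < 1) hC1 h3').
  apply: (le_trans _ (vmin v (conj pv v3))).
  by rewrite /psum (sF (fun x => x^+4)) (sFs (fun x => x^+4)) ?expr0n // e4.
Qed.
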